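(* Under the assumptions of the context, there exist a neighborhood $U$ of $\bar\xi$ and $\varepsilon>0$ such that for every $\xi\in U$ there is $j\in\{1,2,3\}$ with \[ \varepsilon^{-1}|\nu_j(\xi)|\ge\alpha(\xi), \] where $\nu_1(\xi),\nu_2(\xi),\nu_3(\xi)$ are the (complex) roots in $t$ of $t^3+a_1(\xi)t^2+a_2(\xi)t+a_3(\xi)=0$.
   Context: Let $a(t,\xi),b(t,\xi)$ be real-valued $C^\infty$ functions on $(-c,T)\times(\mathbb R^n\setminus\{0\})$, homogeneous of degree $0$ in $\xi$, with $\Delta:=4a^3-27b^2\ge0$ for $t\in[0,T)$. Let $|\bar\xi|=1$ with $a(0,\bar\xi)=0$, $\partial_ta(0,\bar\xi)\ne0$. Near $(0,\bar\xi)$ write $a(t,\xi)=e_1(t,\xi)(t+\alpha(\xi))$ with $e_1>0$ smooth and $\alpha$ smooth, $\alpha(\bar\xi)=0$, $\alpha\ge0$ near $\bar\xi$, and $\Delta(t,\xi)=e_2(t,\xi)\{t^3+a_1(\xi)t^2+a_2(\xi)t+a_3(\xi)\}$ with $e_2>0$ smooth and $a_j$ smooth real-valued, $a_j(\bar\xi)=0$. *)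

(* Defs.v *)
From mathcomp Require Import all_boot all_order all_algebra.
From mathcomp Require Import all_classical all_reals all_analysis.
From mathcomp Require Export complex.
Export GRing.Theory Num.Theory.
Import numFieldNormedType.Exports.
Set Implicit Arguments.
Unset Strict Implicit.
Unset Printing Implicit Defensive.
Local Open Scope ring_scope.
Local Open Scope classical_set_scope.

Fixpoint Ck {R : realType} {V : normedModType R} (k : nat) (D : set V)
  (f : V -> R) : Prop :=
  match k with
  | 0 => forall x, D x -> {for x, continuous f}
  | k'.+1 => (forall x, D x -> forall v : V, derivable f x v) /\
             (forall v : V, Ck k' D ('D_v f))
  end.

Definition smooth_on {R : realType} {V : normedModType R} (D : set V)
  (f : V -> R) : Prop := forall k, Ck k D f.

Definition txdom {R : realType} (n : nat) (c T : R) : set (R * 'rV[R]_n) :=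
  [set p | - c < p.1 < T /\ p.2 != 0].

Definition disc {R : realType} {X : Type} (a b : X -> R) : X -> R :=
  fun p => 4 * a p ^+ 3 - 27 * b p ^+ 2.

Definition eucl2 {R : realType} (n : nat) (x : 'rV[R]_n) : R :=
  \sum_(i < n) x ord0 i ^+ 2.
Arguments txdom {R} n c T _.

(* Main.v *)
Require Import Defs.
From mathcomp Require Import all_boot all_order all_algebra all_field.
From mathcomp Require Import all_classical all_reals all_analysis.
From mathcomp Require Import complex.
From mathcomp Require Import ring lra.
Import Order.TTheory GRing.Theory Num.Theory.
Import numFieldNormedType.Exports.
Local Open Scope ring_scope.
Local Open Scope classical_set_scope.

Section S.
Variable R : realType.
Variable n : nat.
Definition e0 : R * 'rV[R]_n := (1, 0).

Lemma shiftE (h t : R) (xi : 'rV[R]_n) : h *: e0 + (t, xi) = (h *: (1:R) + t, xi).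
Proof. by rewrite /e0; congr pair => /=; rewrite ?scaler0 ?add0r. Qed.

Lemma line_fun (f : R * 'rV[R]_n -> R) t xi :
  (fun h : R => h^-1 *: ((f \o shift (t, xi)) (h *: e0) - f (t, xi))) =
  (fun h : R => h^-1 *: (((fun s => f (s, xi)) \o shift t) (h *: 1) - (fun s => f (s, xi)) t)).
Proof. apply: funext => h /=. by rewrite shiftE. Qed.

Lemma line_derivable (f : R * 'rV[R]_n -> R) t xi :
  derivable f (t,xi) e0 -> is_derive t 1 (fun s => f (s,xi)) ('D_e0 f (t,xi)).
Proof.
move=> H.
have H' : derivable (fun s => f (s,xi)) t 1 by rewrite /derivable -line_fun.
apply: DeriveDef => //.
by rewrite /derive -line_fun.
Qed.
End S.
Section S.
Variable R : realType.

Lemma mvt_r (g g1 : R -> R) (r a b : R) :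
  (forall s, -r < s < r -> is_derive s 1 g (g1 s)) ->
  -r < a -> a < b -> b < r ->
  exists c, [/\ a < c, c < b & g b - g a = g1 c * (b - a)].
Proof.
move=> hd ha hab hb.
have H2 : {within `[a, b], continuous g}.
  apply: derivable_within_continuous => x; rewrite in_itv /= => /andP[h1 h2].
  have : -r < x < r by rewrite (lt_le_trans ha h1) (le_lt_trans h2 hb).
  by move/hd => [].
have [x|c cin E] := @MVT R g g1 a b hab _ H2.
  rewrite in_itv /= => /andP[h1 h2]; apply: hd.
  by rewrite (lt_trans ha h1) (lt_trans h2 hb).
by exists c; move: cin; rewrite in_itv /= => /andP[-> ->].
Qed.

Arguments mvt_r {g g1 r a b}.

Lemma second_diff (g g1 g2 : R -> R) (r M h : R) :
  (forall s, -r < s < r -> is_derive s 1 g (g1 s)) ->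
  (forall s, -r < s < r -> is_derive s 1 g1 (g2 s)) ->
  (forall s, -r < s < r -> `|g2 s| <= M) ->
  0 < h -> h < r ->
  `|g h + g (-h) - 2 * g 0| <= 2 * M * h ^+ 2.
Proof.
move=> d1 d2 bM h0 hr.
have r0 : 0 < r by apply: lt_trans hr.
have hNr : -r < -h by rewrite ltrN2.
have Nr0 : -r < 0 by rewrite oppr_lt0.
have [c1 [c1a c1b e1]] := mvt_r d1 Nr0 h0 hr.
have Nh0 : -h < 0 by rewrite oppr_lt0.
have [c2 [c2a c2b e2]] := mvt_r d1 hNr Nh0 r0.
have c21 : c2 < c1 by apply: lt_trans c1a.
have [c3 [c3a c3b e3]] := mvt_r d2 (lt_trans hNr c2a) c21 (lt_trans c1b hr).
have -> : g h + g (- h) - 2 * g 0 = (g h - g 0) - (g 0 - g (-h)) by ring.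
rewrite e1 e2 !subr0 opprK add0r.
have -> : g1 c1 * h - g1 c2 * h = (g1 c1 - g1 c2) * h by ring.
rewrite e3 -mulrA normrM.
have Mc : `|g2 c3| <= M.
  apply: bM; rewrite (lt_trans _ c3a) ?(lt_trans c3b) //.
    by rewrite (lt_trans c1b hr).
  by rewrite (lt_trans hNr c2a).
have : `|(c1 - c2) * h| <= 2 * h ^+ 2.
  rewrite normrM (gtr0_norm h0) gtr0_norm ?subr_gt0 //.
  rewrite expr2 mulrA ler_wpM2r ?ltW //.
  lra.
move=> H; have M0 : 0 <= M by apply: le_trans Mc.
by rewrite (mulrC 2 M) -mulrA; apply: ler_pM.
Qed.
End S.
Section S4.
Variable R : realFieldType.
Lemma alg_contra (x y z c : R) : 0 < c ->
  `|x^+2 - c| <= c / 100 -> `|y^+2 - c| <= c / 100 -> `|z^+2 - 7 * c| <= c / 100 ->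
  (x + z - 2 * y) ^+ 2 <= c / (100*100) -> False.
Proof.
move=> c0 /ler_normlP[hx1 hx2] /ler_normlP[hy1 hy2] /ler_normlP[hz1 hz2] hr.
set r := x + z - 2 * y in hr.
have ez : z = 2 * y - x + r by rewrite /r; ring.
set S := 4 * y^+2 + x^+2 - z^+2 + r^+2.
set T := 2 * r * (2 * y - x).
have E : 4 * x * y = S + T by rewrite /S /T ez; ring.
have hS : S ^+ 2 <= (43 / 10) * c ^+ 2.
  have r0 : 0 <= r ^+ 2 by apply: sqr_ge0.
  have h1 : S <= 207/100 * c by rewrite /S; lra.
  have h2 : - (207/100 * c) <= S by rewrite /S; lra.
  nra.
have hT : T ^+ 2 <= c ^+ 2 / 100.
  have -> : T ^+ 2 = 4 * r^+2 * (2 * y - x) ^+ 2 by rewrite /T; ring.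
  have h3 : (2 * y - x) ^+ 2 <= 2 * (4 * y^+2 + x^+2).
    have : 0 <= (2 * y + x) ^+ 2 by apply: sqr_ge0.
    lra.
  have h4 : 0 <= (2 * y - x) ^+ 2 by apply: sqr_ge0.
  have h5 : 0 <= r ^+ 2 by apply: sqr_ge0.
  nra.
have hST : (S + T) ^+ 2 <= 2 * S ^+ 2 + 2 * T ^+ 2.
  have : 0 <= (S - T) ^+ 2 by apply: sqr_ge0.
  lra.
have hxy : 16 * (x ^+ 2 * y ^+ 2) >= 16 * ((99/100 * c) ^+ 2).
  have : 0 <= 99/100 * c by lra.
  nra.
have : (4 * x * y) ^+ 2 = 16 * (x ^+ 2 * y ^+ 2) by ring.
rewrite E => H.
nra.
Qed.
End S4.
Section S5.
Variable F : closedFieldType.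
Lemma cubic_fact (b1 b2 b3 : F) : exists n1 n2 n3 : F,
  [/\ b1 = -(n1+n2+n3), b2 = n1*n2+n1*n3+n2*n3 & b3 = -(n1*n2*n3)].
Proof.
have [n1 h1] := @solve_monicpoly F 3 (fun i => if i == 0%N then -b3 else if i == 1%N then -b2 else -b1) isT.
move: h1; rewrite !big_ord_recl big_ord0 /bump /= => h1.
have e1 : b3 = - (n1^+3 + b1 * n1^+2 + b2 * n1).
  by rewrite h1; ring.
set u := b1 + n1. set w := b2 + n1 * u.
have [n2 h2] := @solve_monicpoly F 2 (fun i => if i == 0%N then -w else -u) isT.
move: h2; rewrite !big_ord_recl big_ord0 /bump /= => h2.
have e2 : n2 ^+ 2 = - w - u * n2 by rewrite h2; ring.
exists n1, n2, (-u - n2); split.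
- rewrite /u; ring.
- have -> : n2 * (- u - n2) = - u * n2 - n2 ^+ 2 by ring.
  rewrite e2 /w /u; ring.
- have -> : n1 * n2 * (- u - n2) = n1 * (- u * n2 - n2 ^+ 2) by ring.
  rewrite e2 e1 /w /u; ring.
Qed.
End S5.
Section S6.
Variable R : realType.
Local Notation nc := (@Normc.normc R).
Lemma nc_real (x : R) : nc (x%:C)%C = `|x|.
Proof. by rewrite /Normc.normc /= expr0n /= addr0 sqrtr_sqr. Qed.
Lemma nc_ge0 (x : R[i]) : 0 <= nc x.
Proof. by case: x => a b; rewrite /Normc.normc sqrtr_ge0. Qed.
Lemma coef_bounds (a1 a2 a3 D : R) (n1 n2 n3 : R[i]) :
  (a1%:C)%C = -(n1+n2+n3) -> (a2%:C)%C = n1*n2+n1*n3+n2*n3 -> (a3%:C)%C = -(n1*n2*n3) ->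
  nc n1 <= D -> nc n2 <= D -> nc n3 <= D ->
  [/\ `|a1| <= 3 * D, `|a2| <= 3 * D^+2 & `|a3| <= D^+3].
Proof.
move=> e1 e2 e3 h1 h2 h3.
have g1 := nc_ge0 n1; have g2 := nc_ge0 n2; have g3 := nc_ge0 n3.
have P : forall x y : R[i], nc x <= D -> nc y <= D -> nc (x * y) <= D ^+ 2.
  move=> x y hx hy; rewrite Normc.normcM expr2; apply: ler_pM => //; exact: nc_ge0.
split.
- rewrite -nc_real e1 normcN.
  apply: (le_trans (le_normcD _ _)).
  have := le_normcD n1 n2; lra.
- rewrite -nc_real e2.
  apply: (le_trans (le_normcD _ _)).
  have := le_normcD (n1 * n2) (n1 * n3).
  have := P _ _ h1 h2; have := P _ _ h1 h3; have := P _ _ h2 h3; lra.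
- rewrite -nc_real e3 normcN Normc.normcM.
  rewrite exprSr; apply: ler_pM => //; first by apply: nc_ge0.
  exact: P.
Qed.

Lemma p_close (a1 a2 a3 A d u : R) (n1 n2 n3 : R[i]) :
  (a1%:C)%C = -(n1+n2+n3) -> (a2%:C)%C = n1*n2+n1*n3+n2*n3 -> (a3%:C)%C = -(n1*n2*n3) ->
  0 <= d <= 1 -> 0 <= A ->
  nc n1 <= d * A -> nc n2 <= d * A -> nc n3 <= d * A -> `|u| <= A ->
  `|(u^+3 + a1 * u^+2 + a2 * u + a3) - u^+3| <= 7 * d * A^+3.
Proof.
move=> e1 e2 e3 /andP[d0 d1] A0 h1 h2 h3 hu.
have [b1 b2 b3] := @coef_bounds _ _ _ (d * A) _ _ _ e1 e2 e3 h1 h2 h3.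
have -> : (u^+3 + a1 * u^+2 + a2 * u + a3) - u^+3 = a1 * u^+2 + a2 * u + a3 by ring.
apply: (le_trans (ler_normD _ _)).
rewrite (le_trans (lerD (ler_normD _ _) (lexx _))) //.
rewrite !normrM ?normrX.
have u0 : 0 <= `|u| by [].
have q1 : `|a1| * `|u| ^+ 2 <= 3 * (d * A) * A ^+ 2.
  apply: ler_pM => //; try by apply: exprn_ge0.
  by apply: lerXn2r => //; rewrite nnegrE.
have q2 : `|a2| * `|u| <= 3 * (d * A) ^+ 2 * A by apply: ler_pM.
have dA : d * A <= A by rewrite -[leRHS]mul1r ler_wpM2r.
have dA0 : 0 <= d * A by apply: mulr_ge0.
have dd3 : d ^+ 3 <= d by rewrite !exprS expr0; nra.
have dd2 : d ^+ 2 <= d by rewrite !exprS expr0; nra.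
have A3 : 0 <= A ^+ 3 by apply: exprn_ge0.
have q3 : (d * A) ^+ 3 <= d * A ^+ 3.
  by rewrite exprMn; apply: ler_wpM2r.
have q4 : (d * A) ^+ 2 * A <= d * A ^+ 3.
  by rewrite exprMn -mulrA -exprSr; apply: ler_wpM2r.
have -> : 7 * d * A^+3 = 3 * (d * A) * A ^+ 2 + 3 * (d * A ^+ 3) + d * A^+3.
  by ring.
lra.
Qed.
End S6.

Section S8.
Variable R : realFieldType.
Lemma prod_err (x x0 y y0 ex ey : R) : `|x - x0| <= ex -> `|y - y0| <= ey ->
  `|x * y - x0 * y0| <= ex * `|y0| + `|x0| * ey + ex * ey.
Proof.
move=> hx hy.
have -> : x * y - x0 * y0 = (x - x0) * y0 + x0 * (y - y0) + (x - x0) * (y - y0) by ring.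
have e0 : 0 <= ex by apply: le_trans hx.
apply: (le_trans (ler_normD _ _)); apply: lerD; last first.
  by rewrite normrM; apply: ler_pM.
apply: (le_trans (ler_normD _ _)); apply: lerD; rewrite normrM.
  by apply: ler_wpM2r.
by apply: ler_wpM2l.
Qed.

Arguments prod_err {x x0 y y0 ex ey}.

Lemma budget (k A qm q0 qp Fm F0 Fp Gm G0 Gp Bm B0 Bp : R) :
  0 < k -> 0 < A ->
  `|qm - (- A^+3)| <= 7 / (100*100) * A^+3 -> `|q0 - 0| <= 7 / (100*100) * A^+3 ->
  `|qp - A^+3| <= 7 / (100*100) * A^+3 ->
  `|Fm - k| <= k / (20*100) -> `|F0 - k| <= k / (20*100) -> `|Fp - k| <= k / (20*100) ->
  `|Gm - 4 * k| <= k / 250 -> `|G0 - 4 * k| <= k / 250 ->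
  `|Gp - 4 * k| <= k / 250 ->
  27 * Bm ^+ 2 = - (Gm * qm) ->
  27 * B0 ^+ 2 = 4 * F0 * A^+3 - G0 * q0 ->
  27 * Bp ^+ 2 = 32 * Fp * A^+3 - Gp * qp ->
  (Bm + Bp - 2 * B0) ^+ 2 <= k * A^+3 / (27 * (25*100)) -> False.
Proof.
move=> k0 A0 hqm hq0 hqp hFm hF0 hFp hGm hG0 hGp em e0 ep hr.
have A3 : 0 < A ^+ 3 by apply: exprn_gt0.
set K := A ^+ 3 in A3 hqm hq0 hqp e0 ep hr *.
have k4 : `|4 * k| = 4 * k by rewrite gtr0_norm //; lra.
have pm := prod_err hGm hqm. rewrite k4 normrN (gtr0_norm A3) in pm.
have p0 := prod_err hG0 hq0. rewrite k4 normr0 in p0.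
have pp := prod_err hGp hqp. rewrite k4 (gtr0_norm A3) in pp.
move: pm p0 pp => /ler_normlP[pm1 pm2] /ler_normlP[p01 p02] /ler_normlP[pp1 pp2].
have kK : 0 < k * K by apply: mulr_gt0.
set c := k * K * 4 / 27.
have c0 : 0 < c by rewrite /c; lra.
have F0K : `|F0 * K - k * K| <= k * K / (20*100).
  by rewrite -mulrBl normrM (gtr0_norm A3) mulrAC ler_wpM2r // ?ltW.
move: F0K => /ler_normlP[F0K1 F0K2].
have FpK : `|Fp * K - k * K| <= k * K / (20*100).
  by rewrite -mulrBl normrM (gtr0_norm A3) mulrAC ler_wpM2r // ?ltW.
move: FpK => /ler_normlP[FpK1 FpK2].
apply: (@alg_contra R Bm B0 Bp c c0); try (apply/ler_normlP; split).
all: rewrite /c; lra.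
Qed.
End S8.

Section S9.
Variable R : realFieldType.
Lemma cube_err (E x : R) : 0 < E -> `|E - x| < E / (100*100) -> `|x^+3 - E^+3| <= E^+3 / (20*100).
Proof.
move=> E0 /ltr_normlP[h1 h2].
have -> : x^+3 - E^+3 = (x - E) * (x^+2 + x * E + E^+2) by ring.
have x0 : 0 < x by lra.
have hq : 0 <= x^+2 + x * E + E^+2.
  by rewrite !addr_ge0 ?sqr_ge0 // mulr_ge0 // ltW.
have xE : x <= 11/10 * E by lra.
have hq2 : x^+2 + x * E + E^+2 <= 4 * E^+2.
  have : x * x <= (11/10 * E) * (11/10 * E) by apply: ler_pM => //; lra.
  have : x * E <= (11/10 * E) * E by apply: ler_wpM2r; lra.
  rewrite !expr2; lra.
rewrite normrM (ger0_norm hq).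
have hxE : `|x - E| <= E / (100*100) by apply/ler_normlP; split; lra.
have -> : E ^+ 3 / (20*100) = (E / (100*100)) * (4 * E^+2) * (5 / 4).
  by rewrite exprSr; field.
apply: (le_trans (ler_pM _ _ hxE hq2)) => //.
rewrite -[leLHS]mulr1 ler_wpM2l //; first by apply: mulr_ge0; [lra| rewrite mulr_ge0 // sqr_ge0].
lra.
Qed.

Lemma e2_near (k E2 Fp Fm Gp Gm G : R) : 0 < k -> 0 < E2 ->
  `|Fp - k| <= k/(20*100) -> `|Fm - k| <= k/(20*100) ->
  `|E2 - Gp| < E2/(100*100) -> `|E2 - Gm| < E2/(100*100) ->
  Gp <= 4*Fp -> 4*Fm <= Gm -> `|E2 - G| < E2/(100*100) -> `|G - 4*k| <= k/250.
Proof.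
move=> k0 E0 /ler_normlP[a1 a2] /ler_normlP[b1 b2] /ltr_normlP[c1 c2] /ltr_normlP[d1 d2] h1 h2 /ltr_normlP[e1 e2].
apply/ler_normlP; split; lra.
Qed.

Lemma pick4 (a b c d : R) : 0 < a -> 0 < b -> 0 < c -> 0 < d ->
  exists r, [/\ 0 < r, r <= a, r <= b, r <= c & r <= d].
Proof.
move=> ha hb hc hd; exists (Order.min a (Order.min b (Order.min c d))).
by rewrite !lt_min ha hb hc hd !ge_min !lexx ?orbT.
Qed.
End S9.

Lemma dist_bound (R : realFieldType) (x y : R) : `|x - y| < 1 -> `|y| <= `|x| + 1.
Proof.
move=> /ltr_normlP[h1 h2].
have := ler_norm x; have := ler_norm (- x); rewrite normrN => h3 h4.
apply/ler_normlP; split; lra.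
Qed.

Theorem lemma4p2 (R : realType) (n : nat) (c T : R)
  (a b : R * 'rV[R]_n -> R) (xb : 'rV[R]_n)
  (W : set (R * 'rV[R]_n)) (V : set 'rV[R]_n)
  (e1 e2 : R * 'rV[R]_n -> R) (alpha a1 a2 a3 : 'rV[R]_n -> R) :
  0 < c -> 0 < T ->
  (* a, b smooth on (-c,T) x (R^n \ {0}) *)
  smooth_on (txdom n c T) a -> smooth_on (txdom n c T) b ->
  (* homogeneous of degree 0 in xi *)
  (forall t xi (l : R), txdom n c T (t, xi) -> 0 < l ->
     a (t, l *: xi) = a (t, xi) /\ b (t, l *: xi) = b (t, xi)) ->
  (* Delta >= 0 for t in [0, T) *)
  (forall t xi, 0 <= t < T -> xi != 0 -> 0 <= disc a b (t, xi)) ->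
  (* |xb| = 1, a(0,xb) = 0, d_t a(0,xb) <> 0 *)
  eucl2 xb = 1 -> a (0, xb) = 0 ->
  (fun t => a (t, xb))^`() 0 != 0 ->
  (* local factorizations near (0,xb), resp. near xb *)
  open W -> W (0, xb) -> open V -> V xb ->
  smooth_on W e1 -> smooth_on W e2 ->
  (forall p, W p -> 0 < e1 p /\ 0 < e2 p) ->
  smooth_on V alpha -> smooth_on V a1 -> smooth_on V a2 -> smooth_on V a3 ->
  alpha xb = 0 -> (forall xi, V xi -> 0 <= alpha xi) ->
  a1 xb = 0 -> a2 xb = 0 -> a3 xb = 0 ->
  (forall p, W p -> a p = e1 p * (p.1 + alpha p.2)) ->
  (forall p, W p -> disc a b p =
     e2 p * (p.1 ^+ 3 + a1 p.2 * p.1 ^+ 2 + a2 p.2 * p.1 + a3 p.2)) ->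
  exists U : set 'rV[R]_n, nbhs xb U /\
  exists eps : R, 0 < eps /\
  forall xi, U xi ->
    exists nu : R[i],
      nu ^+ 3 + ((a1 xi)%:C)%C * nu ^+ 2 + ((a2 xi)%:C)%C * nu + ((a3 xi)%:C)%C = 0
      /\ alpha xi <= eps^-1 * Normc.normc nu.
Proof.
move=> c0 T0 sa sb hom hdisc hxb ha0 hder oW Wx0 oV Vxb se1 se2 epos sal sa1 sa2 sa3
  al0 alpos a10 a20 a30 fa fd.
pose x0 : R * 'rV[R]_n := (0, xb).
pose e := e0 R n.
have xb0 : xb != 0.
  apply/eqP => E; move: hxb; rewrite E /eucl2 big1 => [/esym/eqP|i _].
    by rewrite oner_eq0.
  by rewrite mxE expr0n.
have tx0 : txdom n c T x0.
  by rewrite /txdom /x0 /=; split => //; apply/andP; split => //; rewrite oppr_lt0.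
have [Db1 Db2] := sb 2%N.
have [Dd1 Dd2] := Db2 e.
pose D2 := fun p => derive (fun q => derive b q e) p e.
have hD2 : {for x0, continuous D2} := Dd2 e x0 tx0.
have nb : forall (f : R * 'rV[R]_n -> R) ep, 0 < ep -> {for x0, continuous f} ->
    nbhs x0 [set y | `|f x0 - f y| < ep].
  move=> f ep ep0 hc; have := hc (ball (f x0) ep) (nbhsx_ballx _ _ ep0).
  by rewrite -ball_normE.
have [E1p E2p] := epos x0 Wx0.
pose E1 := e1 x0. pose E2 := e2 x0.
pose M := `|D2 x0| + 1.
have Nall : nbhs x0 (W `&` [set y | `|D2 x0 - D2 y| < 1]
   `&` [set y | `|E1 - e1 y| < E1 / (100*100)] `&` [set y | `|E2 - e2 y| < E2 / (100*100)]).
  apply: filterI; [apply: filterI; [apply: filterI|]|].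
  - by apply: open_nbhs_nbhs; split.
  - by apply: nb.
  - by apply: nb => //; [apply: divr_gt0 | exact: (se1 0%N x0 Wx0)].
  - by apply: nb => //; [apply: divr_gt0 | exact: (se2 0%N x0 Wx0)].
case/nbhs_ballP: Nall => r0 r0p Hr0.
have nxb : 0 < `|xb| by rewrite normr_gt0.
have [r [rp rr0 rc rT rxb]] := @pick4 R _ _ _ _ r0p c0 T0 nxb.
have GoodP : forall t xi, `|t| < r -> `|xb - xi| < r ->
  [/\ W (t, xi), txdom n c T (t, xi), `|D2 (t,xi)| <= M,
      `|E1 - e1 (t,xi)| < E1/(100*100) & `|E2 - e2 (t,xi)| < E2/(100*100)].
  move=> t xi ht hxi.
  have hb : ball x0 r0 (t, xi).
    split; rewrite /= -ball_normE /ball_ /=.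
      by rewrite sub0r normrN; apply: lt_le_trans rr0.
    by apply: lt_le_trans rr0.
  have [[[HW HD] HE1] HE2] := Hr0 _ hb.
  split => //.
  - move: ht; rewrite ltr_norml => /andP[h1 h2].
    split => /=; first by apply/andP; split; lra.
    apply/eqP => xi0; move: hxi; rewrite xi0 subr0; lra.
  - exact: dist_bound.
pose k := E1 ^+ 3.
have kp : 0 < k by apply: exprn_gt0.
have key : forall t xi, W (t, xi) ->
    27 * b (t, xi) ^+ 2 = 4 * e1 (t, xi) ^+ 3 * (t + alpha xi) ^+ 3
      - e2 (t, xi) * (t ^+ 3 + a1 xi * t ^+ 2 + a2 xi * t + a3 xi).
  move=> t xi HW; have := fd _ HW; rewrite /disc (fa _ HW) /= => <-; ring.
have Fb : forall t xi, `|t| < r -> `|xb - xi| < r -> `|e1 (t, xi) ^+ 3 - k| <= k / (20*100).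
  by move=> t xi ht hxi; have [_ _ _ H _] := GoodP t xi ht hxi; apply: cube_err.
have r2 : `|r / 2| < r by rewrite gtr0_norm ?divr_gt0 //; lra.
have r2' : `|- (r / 2)| < r by rewrite normrN.
have xbxb : `|xb - xb| < r by rewrite subrr normr0.
have lineP : forall t, W (t, xb) -> 27 * b (t, xb) ^+ 2 = (4 * e1 (t, xb) ^+ 3 - e2 (t, xb)) * t ^+ 3.
  move=> t HW; rewrite key // al0 a10 a20 a30; ring.
have [HWp _ _ _ HGp] := GoodP _ _ r2 xbxb.
have [HWm _ _ _ HGm] := GoodP _ _ r2' xbxb.
have Gpos : e2 (r / 2, xb) <= 4 * e1 (r / 2, xb) ^+ 3.
  have h : 0 <= (4 * e1 (r / 2, xb) ^+ 3 - e2 (r / 2, xb)) * (r / 2) ^+ 3.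
    by rewrite -lineP // mulr_ge0 // sqr_ge0.
  rewrite pmulr_lge0 ?exprn_gt0 ?divr_gt0 // in h; lra.
have Gneg : 4 * e1 (- (r / 2), xb) ^+ 3 <= e2 (- (r / 2), xb).
  have h : 0 <= (4 * e1 (- (r / 2), xb) ^+ 3 - e2 (- (r / 2), xb)) * (- (r / 2)) ^+ 3.
    by rewrite -lineP // mulr_ge0 // sqr_ge0.
  rewrite nmulr_lge0 in h; first lra.
  have hr3 : 0 < (r / 2) ^+ 3 by rewrite exprn_gt0 // divr_gt0.
  have -> : (- (r / 2)) ^+ 3 = - (r / 2) ^+ 3 by ring.
  by rewrite oppr_lt0.
have Gb : forall t xi, `|t| < r -> `|xb - xi| < r -> `|e2 (t, xi) - 4 * k| <= k / 250.
  move=> t xi ht hxi; have [_ _ _ _ H] := GoodP t xi ht hxi.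
  apply: (@e2_near R k E2 _ _ _ _ _ kp E2p (Fb _ _ r2 xbxb) (Fb _ _ r2' xbxb) HGp HGm Gpos Gneg H).
have Mp : 0 < M by rewrite /M; have := normr_ge0 (D2 x0); lra.
pose rho0 := k / (4 * 27 * (25*100) * M ^+ 2).
have rho0p : 0 < rho0.
  by rewrite /rho0 divr_gt0 // !mulr_gt0 // ?exprn_gt0 //.
have hal : {for xb, continuous alpha} := sal 0%N xb Vxb.
have nba : forall ep, 0 < ep -> nbhs xb [set y | `|alpha xb - alpha y| < ep].
  move=> ep ep0; have := hal (ball (alpha xb) ep) (nbhsx_ballx _ _ ep0).
  by rewrite -ball_normE.
exists ([set xi | `|xb - xi| < r] `&` V `&` [set y | `|alpha xb - alpha y| < r]
   `&` [set y | `|alpha xb - alpha y| < rho0]).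
split.
  apply: filterI; [apply: filterI; [apply: filterI|]|].
  - by have := nbhsx_ballx xb r rp; rewrite -ball_normE.
  - by apply: open_nbhs_nbhs; split.
  - exact: nba.
  - exact: nba.
exists (1 / (100 * 100)); split; first by apply: divr_gt0.
move=> xi [[[hxi Vxi] har] hrho].
move: har hrho; rewrite /= al0 sub0r normrN => har hrho.
have [n1 [n2 [n3 [c1 c2 c3]]]] := @cubic_fact _ (a1 xi)%:C%C (a2 xi)%:C%C (a3 xi)%:C%C.
have root : forall nu, nu \in [:: n1; n2; n3] ->
    nu ^+ 3 + ((a1 xi)%:C)%C * nu ^+ 2 + ((a2 xi)%:C)%C * nu + ((a3 xi)%:C)%C = 0.
  by move=> nu; rewrite !inE => /or3P[] /eqP ->; rewrite c1 c2 c3; ring.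
rewrite div1r invrK.
have [H1|H1] := leP (alpha xi) ((100 * 100) * Normc.normc n1).
  by exists n1; split => //; apply: root; rewrite !inE eqxx.
have [H2|H2] := leP (alpha xi) ((100 * 100) * Normc.normc n2).
  by exists n2; split => //; apply: root; rewrite !inE eqxx ?orbT.
have [H3|H3] := leP (alpha xi) ((100 * 100) * Normc.normc n3).
  by exists n3; split => //; apply: root; rewrite !inE eqxx ?orbT.
exfalso.
pose A := alpha xi.
have g1 := nc_ge0 R n1; have g2 := nc_ge0 R n2; have g3 := nc_ge0 R n3.
have Ap : 0 < A by rewrite /A; lra.
rewrite gtr0_norm // in har hrho.
pose d : R := 1 / (100 * 100).
have hd : 0 <= d <= 1 by apply/andP; split; rewrite /d; lra.
have h1 : Normc.normc n1 <= d * A by rewrite /d /A; lra.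
have h2 : Normc.normc n2 <= d * A by rewrite /d /A; lra.
have h3 : Normc.normc n3 <= d * A by rewrite /d /A; lra.
have pc := fun u => @p_close R (a1 xi) (a2 xi) (a3 xi) A d u n1 n2 n3 c1 c2 c3 hd (ltW Ap) h1 h2 h3.
have tm : `|- A| < r by rewrite normrN gtr0_norm.
have t0 : `|0 : R| < r by rewrite normr0.
have tp : `|A| < r by rewrite gtr0_norm.
have [KWm _ _ _ _] := GoodP _ _ tm hxi.
have [KW0 _ _ _ _] := GoodP _ _ t0 hxi.
have [KWp _ _ _ _] := GoodP _ _ tp hxi.
have dd1 : forall s, -r < s < r -> is_derive s 1 (fun s => b (s, xi)) (derive b (s, xi) e).
  move=> s hs; have hs' : `|s| < r by rewrite ltr_norml.
  have [_ Hs _ _ _] := GoodP _ _ hs' hxi.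
  exact: (@line_derivable R n _ _ _ (Db1 _ Hs e)).
have dd2 : forall s, -r < s < r -> is_derive s 1 (fun s => derive b (s, xi) e) (D2 (s, xi)).
  move=> s hs; have hs' : `|s| < r by rewrite ltr_norml.
  have [_ Hs _ _ _] := GoodP _ _ hs' hxi.
  exact: (@line_derivable R n _ _ _ (Dd1 _ Hs e)).
have dd3 : forall s, -r < s < r -> `|D2 (s, xi)| <= M.
  move=> s hs; have hs' : `|s| < r by rewrite ltr_norml.
  by have [_ _ H _ _] := GoodP _ _ hs' hxi.
have Ar : A < r by move: tp; rewrite gtr0_norm.
have sd := @second_diff R (fun s => b (s, xi)) (fun s => derive b (s, xi) e)
   (fun s => D2 (s, xi)) r M A dd1 dd2 dd3 Ap Ar.
simpl in sd.
have hq : forall u, `|u| <= A ->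
    `|(u^+3 + a1 xi * u^+2 + a2 xi * u + a3 xi) - u^+3| <= 7/(100*100) * A^+3.
  by move=> u hu; have := pc u hu; rewrite /d div1r.
pose qm := (-A)^+3 + a1 xi * (-A)^+2 + a2 xi * (-A) + a3 xi.
pose q0 := (0:R)^+3 + a1 xi * (0:R)^+2 + a2 xi * 0 + a3 xi.
pose qp := A^+3 + a1 xi * A^+2 + a2 xi * A + a3 xi.
have hqm : `|qm - (- A^+3)| <= 7/(100*100) * A^+3.
  rewrite (_ : - A^+3 = (-A)^+3); last by ring.
  by apply: hq; rewrite normrN gtr0_norm.
have hq0 : `|q0 - 0| <= 7/(100*100) * A^+3.
  have e00 : (0:R) = 0^+3 by rewrite expr0n.
  rewrite {1}e00; apply: hq; rewrite normr0; exact: ltW.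
have hqp : `|qp - A^+3| <= 7/(100*100) * A^+3.
  by apply: hq; rewrite gtr0_norm.
have em : 27 * b (- A, xi) ^+ 2 = - (e2 (- A, xi) * qm).
  by rewrite key // -/A /qm; ring.
have e00 : 27 * b (0, xi) ^+ 2 = 4 * e1 (0, xi) ^+ 3 * A^+3 - e2 (0, xi) * q0.
  by rewrite key // -/A /q0; ring.
have ep : 27 * b (A, xi) ^+ 2 = 32 * e1 (A, xi) ^+ 3 * A^+3 - e2 (A, xi) * qp.
  by rewrite key // -/A /qp; ring.
have hr : (b (- A, xi) + b (A, xi) - 2 * b (0, xi)) ^+ 2 <= k * A^+3 / (27 * (25*100)).
  move: sd; rewrite (addrC (b (A, xi))).
  set s := _ - _ => /ler_normlP[s1 s2].
  have hs : s ^+ 2 <= (2 * M * A ^+ 2) ^+ 2.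
    have : 0 <= (2 * M * A ^+ 2 - s) * (2 * M * A ^+ 2 + s) by apply: mulr_ge0; lra.
    have -> : (2 * M * A ^+ 2 - s) * (2 * M * A ^+ 2 + s) = (2 * M * A ^+ 2) ^+ 2 - s ^+ 2 by ring.
    lra.
  apply: (le_trans hs).
  have -> : (2 * M * A ^+ 2) ^+ 2 = (4 * M ^+ 2 * A ^+ 3) * A by ring.
  have -> : k * A ^+ 3 / (27 * (25 * 100)) = (4 * M ^+ 2 * A ^+ 3) * rho0.
    rewrite /rho0; field.
    by rewrite gt_eqF.
  apply: ler_wpM2l; last exact: ltW.
  by rewrite !mulr_ge0 // ?exprn_ge0 // ltW.
exact: (@budget R k A qm q0 qp _ _ _ _ _ _ _ _ _ kp Ap hqm hq0 hqp
  (Fb _ _ tm hxi) (Fb _ _ t0 hxi) (Fb _ _ tp hxi)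
  (Gb _ _ tm hxi) (Gb _ _ t0 hxi) (Gb _ _ tp hxi) em e00 ep hr).
Qed.
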